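(* Let $\mathfrak a$ and $A$ be as in the context. Let $R$ be an $A$-module with a decreasing filtration by $A$-submodules $\cdots\supseteq{}^{i-1}R\supseteq{}^iR\supseteq{}^{i+1}R\supseteq\cdots$ such that ${}^iR=R$ for $i\ll0$, ${}^iR=0$ for $i\gg0$, and each ${}^iR/{}^{i+1}R$ is projective as an $\mathfrak a$-module. Let $N$ be an admissible hybrid $A$-module and $\phi:R\twoheadrightarrow N$ a surjective $A$-module homomorphism with $\phi({}^iR)=N_{\ge i}$ for every $i\in\mathbb Z$. Then there is a choice of $\mathfrak a_0$-submodules $h_i\subseteq{}^iR$, each an $\mathfrak a_0$-stable complement to ${}^{i+1}R+\mathrm{rad}^\flat({}^iR)$ in ${}^iR$, such that $\phi(h_i)\subseteq N_i$ for all $i$. The $\mathfrak a$-grading on $R$ obtained by placing $h_i$ in grade $i$ (so that $R=\mathfrak a h\cong\bigoplus_i\mathfrak a\otimes_{\mathfrak a_0}h_i$) makes $R$ an admissible hybrid $A$-module and $\phi$ a surjective morphism of admissible hybrid $A$-modules.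
   Context: All algebras/modules finite dimensional over a field. $\mathfrak a=\bigoplus_{n\ge0}\mathfrak a_n$ is positively graded and $\mathfrak a\to A$ is an algebra homomorphism such that $\mathfrak a_{\ge j}A$ is a two-sided ideal of $A$ for each $j\ge0$, where $\mathfrak a_{\ge j}=\bigoplus_{i\ge j}\mathfrak a_i$. For an $\mathfrak a$-module $X$, $\mathrm{rad}^\flat X=\mathfrak a_{\ge1}X$. A hybrid $A$-module is an $A$-module with a fixed grading making it a graded $\mathfrak a$-module (with $\mathfrak a$ acting via $\mathfrak a\to A$); it is admissible if each $N_{\ge j}=\bigoplus_{i\ge j}N_i$ is an $A$-submodule. Morphisms of hybrid modules are $A$-maps preserving gradings. *)

(* Defs.v *)
From HB Require Import structures.
From mathcomp Require Import all_boot all_order all_algebra falgebra.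
Set Implicit Arguments. Unset Strict Implicit. Unset Printing Implicit Defensive.
Import Order.TTheory GRing.Theory Num.Theory.
Local Open Scope ring_scope.

Section Defs.
Variable F : fieldType.

Definition is_rep (B : falgType F) (X : vectType F) (sigma : B -> 'End(X)) :=
  [/\ forall (c : F) (a b : B), sigma (c *: a + b) = c *: sigma a + sigma b,
      forall a b : B, sigma (a * b) = (sigma a \o sigma b)%VF
    & sigma 1 = \1%VF].

Definition is_hom (B : falgType F) (X Y : vectType F)
  (sX : B -> 'End(X)) (sY : B -> 'End(Y)) (g : 'Hom(X, Y)) :=
  forall b : B, (g \o sX b = sY b \o g)%VF.

Definition is_submod (B : falgType F) (X : vectType F) (sigma : B -> 'End(X))
  (U : {vspace X}) := forall b : B, (sigma b @: U <= U)%VS.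

(* The subquotient U/V (V <= U submodules of X) is projective as a B-module:
   lifting property, with Hom(U/V, Y) encoded as maps on X that are B-linear
   on U and vanish on V. *)
Definition subquot_projective (B : falgType F) (X : vectType F)
  (sigma : B -> 'End(X)) (U V : {vspace X}) :=
  forall (Y Z : vectType F) (sY : B -> 'End(Y)) (sZ : B -> 'End(Z)),
    is_rep sY -> is_rep sZ ->
    forall g : 'Hom(Y, Z), is_hom sY sZ g -> limg g = fullv ->
    forall h : 'Hom(X, Z), (V <= lker h)%VS ->
      (forall (b : B) (u : X), u \in U -> h (sigma b u) = sZ b (h u)) ->
    exists h' : 'Hom(X, Y),
      [/\ (V <= lker h')%VS,
          forall (b : B) (u : X), u \in U -> h' (sigma b u) = sY b (h' u)
        & forall u : X, u \in U -> g (h' u) = h u].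

Definition is_pos_graded_alg (aa : falgType F) (ga : nat -> {vspace aa}) (d : nat) :=
  [/\ forall n, (d <= n)%N -> ga n = 0%VS,
      directv (\sum_(n < d) ga n),
      (\sum_(n < d) ga n)%VS = fullv
    & forall m n, (ga m * ga n <= ga (m + n)%N)%VS].

Definition alg_geq (aa : falgType F) (ga : nat -> {vspace aa}) (d j : nat) :=
  (\sum_(n < d | (j <= n)%N) ga n)%VS.

Definition is_alg_hom (aa A : falgType F) (f : 'Hom(aa, A)) :=
  (forall x y : aa, f (x * y) = f x * f y) /\ f 1 = 1.

Definition is_twosided_ideal (A : falgType F) (I : {vspace A}) :=
  (fullv * I <= I)%VS /\ (I * fullv <= I)%VS.

Definition is_grading (X : vectType F) (gr : int -> {vspace X}) (lo : int) (len : nat) :=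
  [/\ forall i : int, (i < lo) \/ (lo + len%:Z <= i) -> gr i = 0%VS,
      directv (\sum_(k < len) gr (lo + k%:Z)%R)
    & (\sum_(k < len) gr (lo + k%:Z)%R)%VS = fullv].

Definition geq_part (X : vectType F) (gr : int -> {vspace X}) (lo : int) (len : nat)
  (j : int) := (\sum_(k < len | (j <= lo + k%:Z)%R) gr (lo + k%:Z)%R)%VS.

Definition is_graded_amod (aa A : falgType F) (ga : nat -> {vspace aa})
  (f : 'Hom(aa, A)) (X : vectType F) (rho : A -> 'End(X)) (gr : int -> {vspace X}) :=
  forall (n : nat) (i : int) (a : aa), a \in ga n ->
    (rho (f a) @: gr i <= gr (i + n%:Z)%R)%VS.

Definition is_adm_hybrid (aa A : falgType F) (ga : nat -> {vspace aa})
  (f : 'Hom(aa, A)) (X : vectType F) (rho : A -> 'End(X))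
  (gr : int -> {vspace X}) (lo : int) (len : nat) :=
  [/\ is_grading gr lo len, is_graded_amod ga f rho gr
    & forall j : int, is_submod rho (geq_part gr lo len j)].

Definition radflat (aa A : falgType F) (ga : nat -> {vspace aa}) (d : nat)
  (f : 'Hom(aa, A)) (X : vectType F) (rho : A -> 'End(X)) (U : {vspace X}) :=
  (\sum_(a <- vbasis (alg_geq ga d 1)) (rho (f a) @: U))%VS.

(* the grading obtained by placing h i in degree i: R_i = sum_n aa_n h_{i-n} *)
Definition grading_from (aa A : falgType F) (ga : nat -> {vspace aa}) (d : nat)
  (f : 'Hom(aa, A)) (X : vectType F) (rho : A -> 'End(X)) (h : int -> {vspace X})
  (i : int) :=
  (\sum_(n < d) \sum_(a <- vbasis (ga n)) (rho (f a) @: h (i - (n : nat)%:Z)%R))%VS.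

End Defs.

(* Main.v *)
Require Import Defs.
From HB Require Import structures.
From mathcomp Require Import all_boot all_order all_algebra falgebra.
From Stdlib Require Import IndefiniteDescription.
From mathcomp Require Import zify.
Import Order.TTheory GRing.Theory Num.Theory.
Local Open Scope ring_scope.
Set Implicit Arguments. Unset Strict Implicit. Unset Printing Implicit Defensive.

Lemma int_up_ind (P : int -> Prop) (lo : int) : (forall i, i < lo -> P i) ->
  (forall i, (forall j, j < i -> P j) -> P i) -> forall i, P i.
Proof.
move=> Hb Hs; suff H : forall t : nat, forall i, i < lo + t%:Z -> P i.
  by move=> i; apply: (H (`|i - lo|%N + 1)%N); lia.
elim=> [|t IH] i hi; first by apply: Hb; lia.
case: (boolP (i < lo + t%:Z)) => c; first exact: IH.
by apply: Hs => j hj; apply: IH; move/negP: c => c; lia.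
Qed.

Lemma int_down_ind (P : int -> Prop) (hi : int) : (forall i, hi <= i -> P i) ->
  (forall i, P (i + 1) -> P i) -> forall i, P i.
Proof.
move=> Hb Hs; suff H : forall t : nat, forall i, hi <= i + t%:Z -> P i.
  by move=> i; apply: (H `|hi - i|%N); lia.
elim=> [|t IH] i hi'; first by apply: Hb; lia.
by apply: Hs; apply: IH; lia.
Qed.

Section Main.
Variables (F : fieldType) (aa A : falgType F)
  (ga : nat -> {vspace aa}) (d : nat) (f : 'Hom(aa, A)).
Hypothesis Hga : is_pos_graded_alg ga d.
Hypothesis Hf : is_alg_hom f.
Variables (R : vectType F) (rhoR : A -> 'End(R)).
Hypothesis HrhoR : is_rep rhoR.

Local Notation act a := (rhoR (f a)).

Lemma rhoR_lin c a b : rhoR (c *: a + b) = c *: rhoR a + rhoR b.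
Proof. by case: HrhoR. Qed.
Lemma rhoR0 : rhoR 0 = 0.
Proof.
have := rhoR_lin 1 0 0; rewrite scale1r addr0 scale1r => H.
by apply: (addrI (rhoR 0)); rewrite addr0 -H.
Qed.
Lemma rhoRD a b : rhoR (a + b) = rhoR a + rhoR b.
Proof. by have := rhoR_lin 1 a b; rewrite !scale1r. Qed.
Lemma rhoRZ c a : rhoR (c *: a) = c *: rhoR a.
Proof. by have := rhoR_lin c a 0; rewrite !addr0 rhoR0 addr0. Qed.
Lemma rhoRM a b x : rhoR (a * b) x = rhoR a (rhoR b x).
Proof. by case: HrhoR => _ -> _; rewrite comp_lfunE. Qed.
Lemma rhoR1 x : rhoR 1 x = x.
Proof. by case: HrhoR => _ _ ->; rewrite id_lfunE. Qed.

Lemma act0 x : act 0 x = 0.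
Proof. by rewrite linear0 rhoR0 zero_lfunE. Qed.
Lemma actD a b x : act (a + b) x = act a x + act b x.
Proof. by rewrite linearD rhoRD add_lfunE. Qed.
Lemma actZ c a x : act (c *: a) x = c *: act a x.
Proof. by rewrite linearZ rhoRZ scale_lfunE. Qed.
Lemma actN a x : act (- a) x = - act a x.
Proof. by rewrite -scaleN1r actZ scaleN1r. Qed.
Lemma actB a b x : act (a - b) x = act a x - act b x.
Proof. by rewrite actD actN. Qed.
Lemma act_sum I (r : seq I) (P : pred I) (G : I -> aa) x :
  act (\sum_(i <- r | P i) G i) x = \sum_(i <- r | P i) act (G i) x.
Proof.
elim/big_rec2: _ => [|i y1 y2 _ <-]; first by rewrite act0.
by rewrite actD.
Qed.
Lemma actM a b x : act (a * b) x = act a (act b x).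
Proof. by case: Hf => -> _; rewrite rhoRM. Qed.
Lemma act1 x : act 1 x = x.
Proof. by case: Hf => _ ->; rewrite rhoR1. Qed.

Definition evR (x : R) (y : A) := rhoR y x.
Lemma evR_lin x : linear (evR x).
Proof. by move=> c a b; rewrite /evR rhoR_lin add_lfunE scale_lfunE. Qed.
HB.instance Definition _ x := GRing.isLinear.Build F A R *:%R (evR x) (evR_lin x).
Definition actv (x : R) : 'Hom(aa, R) := (linfun (evR x) \o f)%VF.
Lemma actvE x a : actv x a = act a x.
Proof. by rewrite comp_lfunE lfunE. Qed.

Lemma ga_ge_d n : (d <= n)%N -> ga n = 0%VS.
Proof. by case: Hga => H _ _ _; apply: H. Qed.
Lemma gaM m n : (ga m * ga n <= ga (m + n)%N)%VS.
Proof. by case: Hga. Qed.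
Lemma memgaM m n a b : a \in ga m -> b \in ga n -> a * b \in ga (m + n)%N.
Proof. by move=> ha hb; apply: (subvP (gaM m n)); apply: memv_mul. Qed.

Lemma geq_sub m n : (m <= n)%N -> (ga n <= alg_geq ga d m)%VS.
Proof.
move=> mn; case: (ltnP n d) => nd.
  by apply: (sumv_sup (Ordinal nd)).
by rewrite ga_ge_d ?sub0v.
Qed.
Lemma geq0 : alg_geq ga d 0 = fullv.
Proof. by case: Hga => _ _ H _; rewrite /alg_geq -H; apply: eq_bigl. Qed.
Lemma geqM m n a b : a \in alg_geq ga d m -> b \in alg_geq ga d n ->
  a * b \in alg_geq ga d (m + n).
Proof.
move=> /memv_sumP [as_ Has ->] /memv_sumP [bs Hbs ->].
rewrite mulr_suml; apply: memv_suml => k hk.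
rewrite mulr_sumr; apply: memv_suml => l hl.
apply: (subvP (geq_sub (leq_add hk hl))).
by apply: memgaM; [apply: Has | apply: Hbs].
Qed.

Definition defV : fullv = (\sum_(n < d) ga n)%VS.
Proof. by case: Hga => _ _ H _; rewrite H. Defined.
Definition piV (n : 'I_d) : 'End(aa) := sumv_pi_for defV n.
Lemma pi_mem n a : piV n a \in ga n.
Proof. exact: memv_sum_pi. Qed.
Lemma pi_sum a : \sum_(n < d) piV n a = a.
Proof. exact: (sumv_pi_sum defV (memvf a)). Qed.
Lemma pi_uniq (z : 'I_d -> aa) : (forall n, z n \in ga n) ->
  forall n, piV n (\sum_(m < d) z m) = z n.
Proof.
move=> Hz n; apply/eqP; rewrite -subr_eq0; apply/eqP.
have Hd : directv (\sum_(n < d) ga n) by case: Hga.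
move/directv_sum_independent: Hd => Hd.
apply: (Hd (fun n => piV n (\sum_(m < d) z m) - z n)) => //.
  by move=> i _; apply: memvB; [apply: pi_mem | apply: Hz].
by rewrite sumrB pi_sum subrr.
Qed.
Lemma pi_homog (m : nat) x n : x \in ga m ->
  piV n x = if val n == m then x else 0.
Proof.
move=> hx; case: (ltnP m d) => md; last first.
  move: hx; rewrite ga_ge_d // memv0 => /eqP ->.
  by rewrite linear0; case: eqP => // e; move: (ltn_ord n); rewrite e ltnNge md.
have E : \sum_(k < d) (if val k == m then x else 0) = x.
  rewrite (bigD1 (Ordinal md)) //= eqxx big1 ?addr0 // => k.
  by rewrite -val_eqE /=; case: eqP => // ->; rewrite eqxx.
rewrite -{1}E pi_uniq //.
by move=> k; case: eqP => [->|_]; rewrite ?mem0v.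
Qed.

Definition compo (m : nat) : 'End(aa) := \sum_(n < d | val n == m) piV n.
Lemma compoE m a : compo m a = \sum_(n < d | val n == m) piV n a.
Proof. by rewrite sum_lfunE. Qed.
Lemma compo_ord (n : 'I_d) a : compo n a = piV n a.
Proof. by rewrite compoE (big_pred1 n) // => k; rewrite val_eqE. Qed.
Lemma compo_mem m a : compo m a \in ga m.
Proof. by rewrite compoE; apply: memv_suml => n /eqP <-; apply: pi_mem. Qed.
Lemma compo_homog n m x : x \in ga n -> compo m x = if n == m then x else 0.
Proof.
move=> hx; rewrite compoE.
under eq_bigr => k _ do rewrite (pi_homog k hx).
case: eqP => [<-|nm].
  case: (ltnP n d) => nd.
    rewrite (bigD1 (Ordinal nd)) //= eqxx big1 ?addr0 // => k /andP[/eqP e ne].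
    by case: eqP => // e'; case/negP: ne; rewrite -val_eqE /= e'.
  by move: hx; rewrite ga_ge_d // memv0 => /eqP ->; rewrite big1 // => k _; case: eqP.
rewrite big1 // => k /eqP e; case: eqP => // e'; by case: nm; rewrite -e e'.
Qed.
Lemma compo_sum a : \sum_(n < d) compo n a = a.
Proof. by under eq_bigr => n _ do rewrite compo_ord; apply: pi_sum. Qed.
Lemma compoM n m a y : a \in ga n ->
  compo m (a * y) = if (n <= m)%N then a * compo (m - n) y else 0.
Proof.
move=> ha; rewrite -{1}(pi_sum y) mulr_sumr linear_sum /=.
under eq_bigr => k _ do rewrite (compo_homog m (memgaM ha (pi_mem k y))).
rewrite -big_mkcond /=; case: leqP => nm.
  rewrite compoE mulr_sumr; apply: eq_bigl => k.
  by apply/eqP/eqP => [<-|->]; [rewrite addKn | rewrite subnKC].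
by rewrite big1 // => k /eqP e; move: nm; rewrite -e ltnNge leq_addr.
Qed.
Lemma compo0_geq1 a y : a \in alg_geq ga d 1 -> compo 0 (a * y) = 0.
Proof.
move=> /memv_sumP [as_ Has ->]; rewrite mulr_suml linear_sum big1 //= => k hk.
by rewrite (@compoM k 0%N _ y (Has k hk)) leqn0; case: eqP => // e; move: hk; rewrite e.
Qed.
Lemma compo_geq1 y : y - compo 0 y \in alg_geq ga d 1.
Proof.
rewrite -{1}(pi_sum y) (bigID (fun n : 'I_d => val n == 0%N)) /= -compoE addrC addrK.
apply: memv_suml => n hn; apply: (subvP (geq_sub (m:=1) _)); last exact: pi_mem.
by rewrite lt0n.
Qed.
Lemma compo_ge m : (d <= m)%N -> compo m = 0.
Proof.
move=> dm; apply/lfunP => a; rewrite zero_lfunE.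
by apply/eqP; rewrite -memv0 -(ga_ge_d dm) compo_mem.
Qed.

Definition gen (U : {vspace aa}) (X : {vspace R}) :=
  (\sum_(a <- vbasis U) (act a @: X))%VS.

Lemma gen_ind (P : R -> Prop) (U : {vspace aa}) (X : {vspace R}) : P 0 -> (forall y z, P y -> P z -> P (y + z)) ->
  (forall a x, a \in U -> x \in X -> P (act a x)) ->
  forall y, y \in gen U X -> P y.
Proof.
move=> P0 PD Pa y; rewrite /gen big_tuple => /memv_sumP [vs Hvs ->].
apply: big_ind => // i _; have /memv_imgP [x Hx ->] := Hvs i isT.
by apply: Pa => //; apply: vbasis_mem; apply: mem_tnth.
Qed.
Lemma gen_sub (U : {vspace aa}) (X W : {vspace R}) : (forall a x, a \in U -> x \in X -> act a x \in W) ->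
  (gen U X <= W)%VS.
Proof.
move=> H; apply/subvP; apply: gen_ind => //; [exact: mem0v | exact: memvD].
Qed.
Lemma gen_mem (U : {vspace aa}) (X : {vspace R}) a x : a \in U -> x \in X -> act a x \in gen U X.
Proof.
move=> /coord_vbasis -> hx; rewrite act_sum; apply: memv_suml => i _.
rewrite actZ; apply: memvZ; rewrite /gen big_tuple.
apply: (sumv_sup (Ordinal (ltn_ord i))) => //.
by rewrite (tnth_nth 0) /=; apply: memv_img.
Qed.


Definition evj (k : nat) (j : 'I_k) (y : {ffun 'I_k -> aa}) := y j.
Lemma evj_lin k j : linear (@evj k j).
Proof. by move=> c a b; rewrite /evj !ffunE. Qed.
HB.instance Definition _ k j :=
  GRing.isLinear.Build F {ffun 'I_k -> aa} aa *:%R (@evj k j) (@evj_lin k j).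
Definition mulY (k : nat) (b : aa) (y : {ffun 'I_k -> aa}) : {ffun 'I_k -> aa} :=
  [ffun j => b * y j].
Lemma mulY_lin k b : linear (@mulY k b).
Proof. by move=> c y z; apply/ffunP => j; rewrite !ffunE mulrDr scalerAr. Qed.
HB.instance Definition _ k b :=
  GRing.isLinear.Build F {ffun 'I_k -> aa} {ffun 'I_k -> aa} *:%R (@mulY k b)
    (@mulY_lin k b).

Lemma proj_lift (U V : {vspace R}) (HVU : (V <= U)%VS)
  (HUs : forall a u, u \in U -> act a u \in U)
  (HVs : forall a v, v \in V -> act a v \in V)
  (Hp : subquot_projective (fun a : aa => rhoR (f a)) U V)
  k (s : 'I_k -> R) (Hs : forall j, s j \in U)
  (Hspan : forall u, u \in U ->
     exists y : 'I_k -> aa, u - \sum_j act (y j) (s j) \in V) :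
  exists H : 'Hom(R, {ffun 'I_k -> aa}),
   [/\ forall v, v \in V -> H v = 0,
       forall b u, u \in U -> H (act b u) = [ffun j => b * H u j]
     & forall u, u \in U -> u - \sum_j act (H u j) (s j) \in V].
Proof.
set C := (U :\: V)%VS; set p := addv_pi1 U V.
have pC w : p w \in C by rewrite /p /addv_pi1; apply: memv_pi.
have CU : (C <= U)%VS by apply: diffvSl.
have UV w : w \in U -> w \in (U + V)%VS by move=> hw; apply: (subvP (addvSl U V)).
have pU w : w \in U -> w - p w \in V.
  move=> hw; have := addv_pi1_pi2 (UV _ hw); rewrite -/p => E.
  by rewrite -{1}E addrAC subrr add0r; apply: memv_pi2.
have pV v : v \in V -> p v = 0.
  move=> hv; have h1 := pU v (subvP HVU _ hv).
  have h2 : p v \in V.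
    have -> : p v = v - (v - p v) by rewrite opprB addrC subrK.
    by apply: memvB.
  by apply/eqP; rewrite -memv0 -(capv_diff U V) memv_cap pC.
pose qL : 'Hom(R, subvs_of C) := (linfun (vsproj C) \o p)%VF.
have qE w : qL w = vsproj C (p w) by rewrite comp_lfunE lfunE.
have vsq w : vsval (qL w) = p w by rewrite qE vsprojK.
have qV v : v \in V -> qL v = 0 by move=> hv; rewrite qE pV // linear0.
have qact a w : w \in U -> qL (act a (p w)) = qL (act a w).
  move=> hw; apply/eqP; rewrite -subr_eq0 -linearB /= -linearB /=.
  by rewrite qV // -opprB linearN /= memvN HVs // pU.
have qker w : w \in U -> qL w = 0 -> w \in V.
  move=> hw /(congr1 vsval); rewrite vsq linear0 => E.
  by have := pU w hw; rewrite E subr0.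
have qvs z : qL (vsval z) = z.
  apply: subvs_inj; rewrite vsq /p /addv_pi1 daddv_pi_id //; last exact: subvsP.
  exact: capv_diff.
pose sZ (b : aa) : 'End(subvs_of C) := (qL \o rhoR (f b) \o linfun vsval)%VF.
have sZE b z : sZ b z = qL (act b (vsval z)).
  by rewrite /sZ /qL !comp_lfunE !lfunE.
pose sY (b : aa) : 'End({ffun 'I_k -> aa}) := linfun (@mulY k b).
have sYE b y : sY b y = [ffun j => b * y j] by rewrite lfunE.
pose eps : 'Hom({ffun 'I_k -> aa}, R) :=
  (\sum_j (actv (s j) \o linfun (@evj k j)))%VF.
have epsE y : eps y = \sum_j act (y j) (s j).
  by rewrite sum_lfunE; apply: eq_bigr => j _; rewrite comp_lfunE actvE lfunE.
have epsU y : eps y \in U by rewrite epsE; apply: memv_suml => j _; apply: HUs.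
pose g := (qL \o eps)%VF.
have repY : is_rep sY.
  split.
  - move=> c a b; apply/lfunP => y; rewrite add_lfunE scale_lfunE !sYE.
    by apply/ffunP => j; rewrite !ffunE mulrDl scalerAl.
  - by move=> a b; apply/lfunP => y; rewrite comp_lfunE !sYE; apply/ffunP => j;
      rewrite !ffunE mulrA.
  - by apply/lfunP => y; rewrite id_lfunE sYE; apply/ffunP => j; rewrite ffunE mul1r.
have repZ : is_rep sZ.
  split.
  - move=> c a b; apply/lfunP => z; rewrite add_lfunE scale_lfunE !sZE.
    by rewrite actD actZ linearD linearZ.
  - move=> a b; apply/lfunP => z; rewrite comp_lfunE !sZE vsq actM qact //.
    by apply: HUs; apply: (subvP CU); apply: subvsP.
  - by apply/lfunP => z; rewrite id_lfunE sZE act1 qvs.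
have homg : is_hom sY sZ g.
  move=> b; apply/lfunP => y.
  rewrite (comp_lfunE g (sY b)) (comp_lfunE (sZ b) g) sYE sZE /g !(comp_lfunE qL eps).
  rewrite vsq qact // !epsE.
  congr (qL _); rewrite linear_sum; apply: eq_bigr => j _.
  by rewrite ffunE actM.
have surjg : limg g = fullv.
  apply/eqP; rewrite eqEsubv subvf /=; apply/subvP => z _.
  have zU : vsval z \in U by apply: (subvP CU); apply: subvsP.
  have [y Hy] := Hspan _ zU.
  have -> : z = g [ffun j => y j].
    rewrite comp_lfunE epsE; apply/eqP; rewrite -subr_eq0 -{1}(qvs z) -linearB /=.
    by rewrite qV //; under eq_bigr => j _ do rewrite ffunE.
  by apply: memv_img; apply: memvf.
have hV : (V <= lker qL)%VS by apply/subvP => v hv; rewrite memv_ker qV.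
have hU : forall (b : aa) (u : R), u \in U -> qL (act b u) = sZ b (qL u).
  by move=> b u hu; rewrite sZE vsq qact.
have [h' [H1 H2 H3]] := Hp _ _ sY sZ repY repZ g homg surjg qL hV hU.
exists h'; split.
- by move=> v hv; apply/eqP; rewrite -memv_ker (subvP H1).
- by move=> b u hu; rewrite H2 // sYE.
- move=> u hu; rewrite -memvN opprB -epsE; apply: qker.
    by apply: memvB.
  by rewrite linearB /=; have := H3 u hu; rewrite comp_lfunE => ->; rewrite subrr.
Qed.

Variable filt : int -> {vspace R}.
Hypothesis Hfilt_sub : forall i, is_submod rhoR (filt i).
Hypothesis Hfilt_dec : forall i : int, (filt (i + 1)%R <= filt i)%VS.
Hypothesis Hfilt_proj : forall i, subquot_projective (fun a : aa => rhoR (f a))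
                                             (filt i) (filt (i + 1)%R).
Variables (N : vectType F) (rhoN : A -> 'End(N)) (grN : int -> {vspace N})
  (loN : int) (lenN : nat).
Hypothesis HN : is_adm_hybrid ga f rhoN grN loN lenN.
Variable phi : 'Hom(R, N).
Hypothesis Hphi : is_hom rhoR rhoN phi.
Hypothesis Hphi_filt : forall i, (phi @: filt i)%VS = geq_part grN loN lenN i.

Lemma filt_actR b i u : u \in filt i -> rhoR b u \in filt i.
Proof. by move=> hu; apply: (subvP (Hfilt_sub i b)); apply: memv_img. Qed.
Lemma filt_act a i u : u \in filt i -> act a u \in filt i.
Proof. exact: filt_actR. Qed.
Lemma filt_mono i j : i <= j -> (filt j <= filt i)%VS.
Proof.
move=> ij; have -> : j = i + `|j - i|%N%:Z.
  by rewrite gez0_abs ?subr_ge0 // addrCA subrr addr0.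
elim: `|j - i|%N => [|n IH]; first by rewrite addr0.
apply: subv_trans IH; rewrite -[n.+1]addn1 PoszD addrA; apply: Hfilt_dec.
Qed.
Lemma filt_S i u : u \in filt (i + 1) -> u \in filt i.
Proof. exact: (subvP (Hfilt_dec i)). Qed.

Lemma phi_act a x : phi (act a x) = rhoN (f a) (phi x).
Proof. by have := Hphi (f a); move/lfunP/(_ x); rewrite !comp_lfunE. Qed.
Lemma grN_act n i a x : a \in ga n -> x \in grN i -> rhoN (f a) x \in grN (i + n%:Z).
Proof.
move=> ha hx; case: HN => _ H _; apply: (subvP (H n i a ha)); exact: memv_img.
Qed.
Lemma geqN_split i :
  (geq_part grN loN lenN i <= grN i + geq_part grN loN lenN (i + 1))%VS.
Proof.
apply/subv_sumP => k hk; case: (eqVneq (loN + k%:Z) i) => [<-|ne].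
  exact: addvSl.
apply: subv_trans (addvSr _ _); apply: (sumv_sup k) => //.
by rewrite lezD1 lt_neqAle eq_sym ne.
Qed.

Definition S i := (filt i :&: phi @^-1: grN i)%VS.
Lemma S_filt i : (S i <= filt i)%VS.
Proof. exact: capvSl. Qed.
Lemma S_phi i x : x \in S i -> phi x \in grN i.
Proof. by rewrite memv_cap memv_preim => /andP[]. Qed.
Lemma S_act i c x : c \in ga 0 -> x \in S i -> act c x \in S i.
Proof.
move=> hc; rewrite !memv_cap -!memv_preim => /andP[h1 h2].
rewrite filt_act //= phi_act.
by have := grN_act hc h2; rewrite addr0.
Qed.
Lemma S_span i u : u \in filt i -> exists2 y, y \in S i & u - y \in filt (i + 1).
Proof.
move=> hu; have := memv_img phi hu; rewrite Hphi_filt => /(subvP (geqN_split i)).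
case/memv_addP => n0 hn0 [n1]; rewrite -Hphi_filt => /memv_imgP [v hv ->] E.
exists (u - v); last by rewrite opprB addrCA subrr addr0.
rewrite memv_cap; apply/andP; split; first by apply: memvB => //; exact: filt_S.
by rewrite -memv_preim linearB /= E addrK.
Qed.

Definition W i := (filt (i + 1) + gen (alg_geq ga d 1) (filt i))%VS.
Lemma W_filt i : (W i <= filt i)%VS.
Proof.
rewrite subv_add Hfilt_dec /=; apply: gen_sub => a x _ hx; exact: filt_act.
Qed.

Lemma exists_h i : exists hh : {vspace R},
  [/\ (hh <= S i)%VS, (hh :&: W i)%VS = 0%VS, (hh + W i)%VS = filt i
    & forall c : aa, c \in ga 0 -> (act c @: hh <= hh)%VS].
Proof.
pose k := \dim (S i).
pose s (j : 'I_k) := (vbasis (S i))`_j.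
have Hs' j : s j \in S i.
  by apply: vbasis_mem; apply: mem_nth; rewrite size_tuple.
have Hs j : s j \in filt i by apply: (subvP (S_filt i)).
have Hspan : forall u, u \in filt i ->
    exists y : 'I_k -> aa, u - \sum_j act (y j) (s j) \in filt (i + 1).
  move=> u hu; have [y hy hu'] := S_span hu.
  exists (fun j => coord (vbasis (S i)) j y *: 1).
  suff -> : \sum_j act (coord (vbasis (S i)) j y *: 1) (s j) = y by [].
  rewrite [X in _ = X](coord_vbasis hy).
  by apply: eq_bigr => j _; rewrite actZ act1.
have [H [H1 H2 H3]] := proj_lift (Hfilt_dec i) (fun a u hu => @filt_act a i u hu)
  (fun a u hu => @filt_act a (i+1) u hu) (@Hfilt_proj i) Hs Hspan.
pose th : 'End(R) :=
  (\sum_(j < k) (actv (s j) \o compo 0 \o linfun (@evj k j) \o H))%VF.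
have thE u : th u = \sum_j act (compo 0 (H u j)) (s j).
  rewrite sum_lfunE; apply: eq_bigr => j _.
  by rewrite comp_lfunE comp_lfunE comp_lfunE actvE lfunE.
have t1 u : th u \in S i.
  by rewrite thE; apply: memv_suml => j _; apply: S_act => //; apply: compo_mem.
have t2 v : v \in filt (i + 1) -> th v = 0.
  move=> hv; rewrite thE big1 // => j _; rewrite H1 // ffunE linear0; exact: act0.
have t3 a u : a \in alg_geq ga d 1 -> u \in filt i -> th (act a u) = 0.
  move=> ha hu; rewrite thE big1 // => j _.
  by rewrite H2 // ffunE compo0_geq1 // act0.
have t4 w : w \in W i -> th w = 0.
  case/memv_addP => v hv [r hr ->]; rewrite linearD /= t2 // add0r.
  move: r hr; apply: gen_ind; first by rewrite linear0.
    by move=> y z hy hz; rewrite linearD /= hy hz addr0.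
  by move=> a x ha hx; apply: t3.
have t5 u : u \in filt i -> u - th u \in W i.
  move=> hu; have -> : u - th u = (u - \sum_j act (H u j) (s j)) +
      \sum_j act (H u j - compo 0 (H u j)) (s j).
    rewrite thE; under [X in _ = _ + X]eq_bigr => j _ do rewrite actB.
    by rewrite sumrB addrA subrK.
  apply: memv_add; first exact: H3.
  apply: memv_suml => j _; apply: gen_mem => //; exact: compo_geq1.
have t6 c u : c \in ga 0 -> u \in filt i -> act c (th u) = th (act c u).
  move=> hc hu; rewrite !thE linear_sum; apply: eq_bigr => j _.
  by rewrite H2 // ffunE (compoM _ _ hc) /= subn0 actM.
exists (th @: filt i)%VS; split.
- by apply/subvP => y /memv_imgP [u _ ->].
- apply/eqP; rewrite -subv0; apply/subvP => y; rewrite memv_cap memv0.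
  case/andP => /memv_imgP [u hu ->] hw.
  have E : th (th u) = th u.
    apply/eqP; rewrite -subr_eq0 -linearB /= -opprB linearN /= (t4 (u - th u)); first by rewrite oppr0.
    exact: t5.
  by rewrite -E t4.
- apply/eqP; rewrite eqEsubv subv_add W_filt andbT; apply/andP; split.
    by apply/subvP => y /memv_imgP [u _ ->]; apply: (subvP (S_filt i)).
  apply/subvP => u hu; rewrite -[u](subrK (th u)) addrC.
  by apply: memv_add; [apply: memv_img | apply: t5].
- move=> c hc; apply/subvP => y /memv_imgP [z /memv_imgP [u hu ->] ->].
  by rewrite t6 // memv_img // filt_act.
Qed.

Definition h i : {vspace R} :=
  proj1_sig (constructive_indefinite_description _ (exists_h i)).
Lemma h_spec i : [/\ (h i <= S i)%VS, (h i :&: W i)%VS = 0%VS, (h i + W i)%VS = filt i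
    & forall c : aa, c \in ga 0 -> (act c @: h i <= h i)%VS].
Proof. exact: (proj2_sig (constructive_indefinite_description _ (exists_h i))). Qed.
Lemma h_S i : (h i <= S i)%VS. Proof. by case: (h_spec i). Qed.
Lemma h_filt i : (h i <= filt i)%VS.
Proof. exact: subv_trans (h_S i) (S_filt i). Qed.
Lemma h_capW i : (h i :&: W i)%VS = 0%VS. Proof. by case: (h_spec i). Qed.
Lemma h_addW i : (h i + W i)%VS = filt i. Proof. by case: (h_spec i). Qed.
Lemma h_act0 i c x : c \in ga 0 -> x \in h i -> act c x \in h i.
Proof. by case: (h_spec i) => _ _ _ H hc hx; apply: (subvP (H c hc)); apply: memv_img. Qed.

Lemma nak i : (filt i <= gen fullv (h i) + filt (i + 1))%VS.
Proof.
set T := (gen fullv (h i) + filt (i + 1))%VS.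
have Q : forall n m, (d <= m + n)%N ->
    forall a u, a \in alg_geq ga d m -> u \in filt i -> act a u \in T.
  elim=> [|n IH] m.
    rewrite addn0 => dm a u; rewrite /alg_geq big1 ?memv0.
      by move=> /eqP -> _; rewrite act0 mem0v.
    by move=> k hk; rewrite ga_ge_d // (leq_trans dm hk).
  rewrite addnS -addSn => /IH Q' a u ha hu.
  move: hu; rewrite -h_addW => /memv_addP [x hx [w /memv_addP [v hv [r hr ->]] ->]].
  rewrite !linearD /=; apply: memvD.
    by apply: (subvP (addvSl _ _)); apply: gen_mem => //; apply: memvf.
  apply: memvD; first by apply: (subvP (addvSr _ _)); apply: filt_act.
  move: r hr; apply: gen_ind; first by rewrite linear0 mem0v.
    by move=> y z hy hz; rewrite linearD; apply: memvD.
  move=> b x' hb hx'; rewrite -actM; apply: Q' => //.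
  by rewrite -addn1; apply: geqM.
apply/subvP => u hu; rewrite -[u]act1; apply: (Q d 0%N) => //.
by rewrite geq0 memvf.
Qed.

Lemma dir_i i (z : 'I_d -> R) : (forall n : 'I_d, z n \in gen (ga n) (h i)) ->
  \sum_(n < d) z n \in filt (i + 1) -> forall n, z n = 0.
Proof.
move=> Hz Hsum.
pose k := \dim (h i).
pose s (j : 'I_k) := (vbasis (h i))`_j.
have Hs' j : s j \in h i.
  by apply: vbasis_mem; apply: mem_nth; rewrite size_tuple.
have Hs j : s j \in filt i by apply: (subvP (h_filt i)).
have Hspan : forall u, u \in filt i ->
    exists y : 'I_k -> aa, u - \sum_j act (y j) (s j) \in filt (i + 1).
  move=> u /(subvP (nak i)) /memv_addP [g hg [v hv ->]].
  suff [y ->] : exists y : 'I_k -> aa, g = \sum_j act (y j) (s j).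
    by exists y; rewrite addrAC subrr add0r.
  move: g hg; apply: gen_ind.
  - by exists (fun _ => 0); rewrite big1 // => j _; rewrite act0.
  - move=> y1 y2 [c1 ->] [c2 ->]; exists (fun j => c1 j + c2 j).
    by rewrite -big_split; apply: eq_bigr => j _; rewrite actD.
  - move=> a x _ hx; exists (fun j => coord (vbasis (h i)) j x *: a).
    rewrite {1}(coord_vbasis hx) linear_sum; apply: eq_bigr => j _.
    by rewrite linearZ actZ.
have [H [H1 H2 H3]] := proj_lift (Hfilt_dec i) (fun a u hu => @filt_act a i u hu)
  (fun a u hu => @filt_act a (i+1) u hu) (@Hfilt_proj i) Hs Hspan.
pose D (m : nat) : 'End(R) :=
  (\sum_(j < k) (actv (s j) \o compo m \o linfun (@evj k j) \o H))%VF.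
have DE m u : D m u = \sum_j act (compo m (H u j)) (s j).
  rewrite sum_lfunE; apply: eq_bigr => j _.
  by rewrite comp_lfunE comp_lfunE comp_lfunE actvE lfunE.
have DV m v : v \in filt (i + 1) -> D m v = 0.
  move=> hv; rewrite DE big1 // => j _; rewrite H1 // ffunE linear0; exact: act0.
have D0 x : x \in h i -> D 0 x = x.
  move=> hx; have hxf : x \in filt i by apply: (subvP (h_filt i)).
  apply/eqP; rewrite eq_sym -subr_eq0 -memv0 -(h_capW i) memv_cap.
  apply/andP; split.
    apply: memvB => //; rewrite DE; apply: memv_suml => j _.
    by apply: h_act0 => //; apply: compo_mem.
  have -> : x - D 0 x = (x - \sum_j act (H x j) (s j)) +
      \sum_j act (H x j - compo 0 (H x j)) (s j).
    rewrite DE; under [X in _ = _ + X]eq_bigr => j _ do rewrite actB.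
    by rewrite sumrB addrA subrK.
  apply: memv_add; first exact: H3.
  apply: memv_suml => j _; apply: gen_mem => //; exact: compo_geq1.
have Dact n m a x : a \in ga n -> x \in h i ->
    D m (act a x) = if (n <= m)%N then act a (D (m - n)%N x) else 0.
  move=> ha hx; have hxf : x \in filt i by apply: (subvP (h_filt i)).
  rewrite !DE; under eq_bigr => j _ do rewrite H2 // ffunE (compoM _ _ ha).
  case: leqP => _; last by rewrite big1 // => j _; rewrite act0.
  by rewrite linear_sum; apply: eq_bigr => j _; rewrite actM.
have Deq (m : nat) y : y \in gen (ga m) (h i) -> D m y = y.
  move: y; apply: gen_ind; first by rewrite linear0.
    by move=> y1 y2 e1 e2; rewrite linearD /= e1 e2.
  by move=> a x ha hx; rewrite (Dact _ _ _ _ ha hx) leqnn subnn D0.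
have Dlt (n m : nat) y : (m < n)%N -> y \in gen (ga n) (h i) -> D m y = 0.
  move=> mn; move: y; apply: gen_ind; first by rewrite linear0.
    by move=> y1 y2 e1 e2; rewrite linearD /= e1 e2 addr0.
  by move=> a x ha hx; rewrite (Dact _ _ _ _ ha hx) leqNgt mn.
suff P : forall m, forall n : 'I_d, (n < m)%N -> z n = 0.
  by move=> n; apply: (P d).
elim=> [|m IH] n0; first by [].
rewrite ltnS leq_eqVlt => /orP [/eqP e|]; last exact: IH.
have := DV m _ Hsum; rewrite linear_sum (bigD1 n0) //= -e Deq // big1 ?addr0 //.
move=> n ne; case: (ltngtP n n0) => c.
- by rewrite IH ?linear0 // -e.
- by apply: (Dlt n); rewrite // -e.
- by case/negP: ne; apply/eqP; apply: val_inj.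
Qed.

Hypothesis Hideal : forall j : nat, is_twosided_ideal (f @: alg_geq ga d j * fullv)%VS.
Variables i0 i1 : int.
Hypothesis Hlo : forall i, i <= i0 -> filt i = fullv.
Hypothesis Hhi : forall i, i1 <= i -> filt i = 0%VS.
Hypothesis Hi01 : i0 <= i1.

Definition loR := i0.
Definition lenR := (`|i1 - i0|%N + d)%N.
Definition Rg i := grading_from ga d f rhoR h i.
Definition G j := geq_part Rg loR lenR j.

Lemma gen0 U : gen U 0 = 0%VS.
Proof.
apply/eqP; rewrite -subv0; apply: gen_sub => a x _; rewrite memv0 => /eqP ->.
by rewrite linear0 mem0v.
Qed.
Lemma h_hi i : i1 <= i -> h i = 0%VS.
Proof. by move=> hi; apply/eqP; rewrite -subv0 -(Hhi hi); exact: h_filt. Qed.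
Lemma h_lo i : i < i0 -> h i = 0%VS.
Proof.
move=> hi; have E : W i = fullv.
  apply/eqP; rewrite eqEsubv subvf /=; apply: subv_trans (addvSl _ _).
  by rewrite Hlo ?subvf //; lia.
by have := h_capW i; rewrite E capvf.
Qed.
Lemma Rg_gen i : Rg i = (\sum_(n < d) gen (ga n) (h (i - n%:Z)))%VS.
Proof. by []. Qed.

Lemma memR k l a x : a \in ga k -> x \in h l -> act a x \in Rg (l + k%:Z).
Proof.
move=> ha hx; case: (ltnP k d) => kd.
  rewrite Rg_gen; apply: (subvP (sumv_sup (Ordinal kd) isT (subvv _))) => /=.
  by rewrite addrK; apply: gen_mem.
by move: ha; rewrite ga_ge_d // memv0 => /eqP ->; rewrite act0 mem0v.
Qed.

Lemma Rg_zero i : (i < loR) \/ (loR + lenR%:Z <= i) -> Rg i = 0%VS.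
Proof.
move=> H; rewrite Rg_gen big1 // => n _; case: H => H.
  by rewrite h_lo ?gen0 //; rewrite /loR in H; lia.
by rewrite h_hi ?gen0 //; rewrite /loR /lenR in H; have := ltn_ord n; lia.
Qed.

Lemma Rt_G j t : j <= t -> (Rg t <= G j)%VS.
Proof.
move=> jt; case: (boolP ((loR <= t) && (t < loR + lenR%:Z))) => c.
  case/andP: c => c1 c2.
  have kl : (`|t - loR|%N < lenR)%N by lia.
  apply: (sumv_sup (Ordinal kl)) => /=; first by lia.
  by rewrite (_ : loR + _ = t) //; lia.
rewrite Rg_zero ?sub0v //; move: c; rewrite negb_and -!ltNge -leNgt => /orP [] c.
  by left.
by right.
Qed.

Lemma G_anti j j' : j <= j' -> (G j' <= G j)%VS.
Proof.
move=> jj; apply/subv_sumP => k hk; apply: (sumv_sup k) => //.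
by apply: le_trans hk.
Qed.

Lemma Pfilt i : forall m a y, a \in alg_geq ga d m -> y \in filt i ->
  act a y \in G (i + m%:Z).
Proof.
move: i; apply: (int_down_ind (hi := i1)).
  by move=> i hi m a y ha; rewrite Hhi // memv0 => /eqP ->; rewrite linear0 mem0v.
move=> i IH m a y ha /(subvP (nak i)) /memv_addP [g hg [v hv ->]].
rewrite linearD /=; apply: memvD; last first.
  by apply: (subvP (G_anti _)) (IH m a v ha hv); lia.
move: g hg; apply: gen_ind; first by rewrite linear0 mem0v.
  by move=> y1 y2 h1 h2; rewrite linearD; apply: memvD.
move=> c x _ hx; rewrite -actM.
have : a * c \in alg_geq ga d (m + 0) by apply: geqM => //; rewrite geq0 memvf.
rewrite addn0 => /memv_sumP [b Hb ->]; rewrite act_sum; apply: memv_suml => n hn.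
apply: (subvP (Rt_G (t := i + n%:Z) _)); first by lia.
by apply: memR => //; apply: Hb.
Qed.

Lemma filt_G i : (filt i <= G i)%VS.
Proof.
apply/subvP => y hy; have := @Pfilt i 0 1 y; rewrite addr0 act1; apply => //.
by rewrite geq0 memvf.
Qed.

Lemma Rg_sum : (\sum_(k < lenR) Rg (loR + k%:Z)%R)%VS = fullv.
Proof.
apply/eqP; rewrite eqEsubv subvf /= -(Hlo (lexx i0)).
apply: subv_trans (filt_G i0) _; apply/subv_sumP => k _.
exact: (sumv_sup k).
Qed.

Lemma Rg_grading : is_grading Rg loR lenR.
Proof.
split; first exact: Rg_zero.
  2: exact: Rg_sum.
apply/directv_sum_independent => us Hus Hsum.
have Z : forall k : 'I_lenR, {vs : 'I_d -> R |
    (forall n : 'I_d, vs n \in gen (ga n) (h (loR + k%:Z - n%:Z))) /\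
    us k = \sum_(n < d) vs n}.
  move=> k; apply: constructive_indefinite_description.
  have := Hus k isT; rewrite Rg_gen => /memv_sumP [vs H1 H2].
  by exists vs; split => // n; apply: H1.
pose z k n := sval (Z k) n.
have Hz k n : z k n \in gen (ga n) (h (loR + k%:Z - n%:Z)).
  exact: (proj1 (svalP (Z k))).
have Huz k : us k = \sum_n z k n by exact: (proj2 (svalP (Z k))).
have C : forall i : int, forall (k : 'I_lenR) (n : 'I_d),
    loR + k%:Z - n%:Z = i -> z k n = 0.
  apply: (int_up_ind (lo := i0)).
    move=> i hi k n e; have := Hz k n; rewrite e h_lo // gen0 memv0.
    by move/eqP.
  move=> i IH.
  pose w (n : 'I_d) := \sum_(k < lenR | loR + k%:Z - n%:Z == i) z k n.
  pose rest (n : 'I_d) := \sum_(k < lenR | loR + k%:Z - n%:Z != i) z k n.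
  have Hw n : w n \in gen (ga n) (h i).
    by apply: memv_suml => k /eqP e; rewrite -e; apply: Hz.
  have E0 : \sum_(n < d) w n + \sum_(n < d) rest n = 0.
    rewrite -big_split /= -[RHS]Hsum.
    under [RHS]eq_bigr => k _ do rewrite Huz.
    rewrite exchange_big /=; apply: eq_bigr => n _.
    by rewrite (bigID (fun k : 'I_lenR => loR + k%:Z - n%:Z == i)) /=.
  have Hr : \sum_(n < d) w n \in filt (i + 1).
    move/eqP: E0; rewrite addr_eq0 => /eqP ->; rewrite memvN.
    apply: memv_suml => n _; apply: memv_suml => k hk.
    case: (ltrP (loR + k%:Z - n%:Z) i) => c.
      by rewrite (IH _ c k n) ?mem0v.
    have c' : i + 1 <= loR + k%:Z - n%:Z.
      by move: hk c; rewrite le_eqVlt => /negP hk /orP [/eqP c|c]; lia.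
    apply: (subvP (filt_mono c')); apply: (subvP _ _ (Hz k n)).
    apply: gen_sub => a x _ hx; apply: filt_act; exact: (subvP (h_filt _)).
  have w0 := dir_i Hw Hr.
  move=> k n e; have := w0 n; rewrite /w (big_pred1 k) // => k'.
  apply/eqP/eqP => [e'|->//]; apply: val_inj => /=; lia.
move=> k _; rewrite Huz big1 // => n _; exact: (C (loR + k%:Z - n%:Z)).
Qed.

Lemma Rg_graded : is_graded_amod ga f rhoR Rg.
Proof.
move=> n i a ha; apply/subvP => _ /memv_imgP [y hy ->].
move: hy; rewrite Rg_gen => /memv_sumP [vs Hvs ->]; rewrite linear_sum.
apply: memv_suml => n' _; move: (vs n') (Hvs n' isT); apply: gen_ind.
- by rewrite linear0 mem0v.
- by move=> y1 y2 h1 h2; rewrite linearD; apply: memvD.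
move=> c x hc hx /=; rewrite -actM; have := memR (memgaM ha hc) hx.
by rewrite (_ : i - n'%:Z + (n + n')%N%:Z = i + n%:Z) //; lia.
Qed.

Lemma G_submod j : is_submod rhoR (G j).
Proof.
move=> b; apply/subvP => _ /memv_imgP [y /memv_sumP [ys Hys ->] ->].
rewrite linear_sum; apply: memv_suml => k hk.
move: (Hys k hk); rewrite Rg_gen => /memv_sumP [vs Hvs ->]; rewrite linear_sum.
apply: memv_suml => n _; move: (vs n) (Hvs n isT); apply: gen_ind.
- by rewrite linear0 mem0v.
- by move=> y1 y2 h1 h2; rewrite linearD; apply: memvD.
move=> c x hc hx /=; set t := loR + k%:Z - n%:Z in hx.
rewrite -rhoRM.
have hI : b * f c \in (f @: alg_geq ga d n * fullv)%VS.
  case: (Hideal n) => HI _; apply: (subvP HI); apply: memv_mul; first exact: memvf.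
  rewrite -[f c]mulr1; apply: memv_mul; last exact: memvf.
  by apply: memv_img; apply: (subvP (geq_sub (leqnn n))).
have : (f @: alg_geq ga d n * fullv <= linfun (evR x) @^-1: G j)%VS.
  apply/prodvP => u v /memv_imgP [a' ha' ->] _; rewrite -memv_preim lfunE; change (rhoR (f a' * v) x \in G j); rewrite rhoRM.
  have hv : rhoR v x \in filt t by apply: filt_actR; apply: (subvP (h_filt t)).
  apply: (subvP (G_anti _)) (@Pfilt t n a' _ ha' hv).
  by rewrite /t; lia.
by move/subvP/(_ _ hI); rewrite -memv_preim lfunE.
Qed.

Lemma Rg_phi i : (phi @: Rg i <= grN i)%VS.
Proof.
apply/subvP => _ /memv_imgP [y hy ->].
move: hy; rewrite Rg_gen => /memv_sumP [vs Hvs ->]; rewrite linear_sum.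
apply: memv_suml => n _; move: (vs n) (Hvs n isT); apply: gen_ind.
- by rewrite linear0 mem0v.
- by move=> y1 y2 h1 h2; rewrite linearD; apply: memvD.
move=> c x hc hx /=; rewrite phi_act.
have := grN_act hc (S_phi (subvP (h_S _) _ hx)); by rewrite subrK.
Qed.

Lemma main_result : exists h : int -> {vspace R},
    [/\ forall i,
          [/\ (h i <= filt i)%VS,
              (h i :&: (filt (i + 1)%R + radflat ga d f rhoR (filt i)))%VS = 0%VS,
              (h i + (filt (i + 1)%R + radflat ga d f rhoR (filt i)))%VS = filt i
            & forall a : aa, a \in ga 0%N -> (rhoR (f a) @: h i <= h i)%VS],
        forall i, (phi @: h i <= grN i)%VS
      & exists (loR : int) (lenR : nat),
          is_adm_hybrid ga f rhoR (grading_from ga d f rhoR h) loR lenR /\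
          forall i, (phi @: grading_from ga d f rhoR h i <= grN i)%VS].
Proof.
exists h; split.
- move=> i; split; [exact: h_filt | exact: h_capW | exact: h_addW |].
  by case: (h_spec i).
- by move=> i; apply/subvP => _ /memv_imgP [x hx ->]; apply: S_phi;
    apply: (subvP (h_S i)).
- exists loR, lenR; split; last exact: Rg_phi.
  by split; [exact: Rg_grading | exact: Rg_graded | exact: G_submod].
Qed.

End Main.

Unset Implicit Arguments.
Set Strict Implicit.

Theorem proposition8p7
  (F : fieldType) (aa A : falgType F)
  (ga : nat -> {vspace aa}) (d : nat) (f : 'Hom(aa, A))
  (Hga : is_pos_graded_alg ga d)
  (Hf : is_alg_hom f)
  (Hideal : forall j : nat, is_twosided_ideal (f @: alg_geq ga d j * fullv)%VS)
  (R : vectType F) (rhoR : A -> 'End(R)) (HrhoR : is_rep rhoR)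
  (filt : int -> {vspace R})
  (Hfilt_sub : forall i, is_submod rhoR (filt i))
  (Hfilt_dec : forall i : int, (filt (i + 1)%R <= filt i)%VS)
  (Hfilt_lo : exists i0 : int, forall i, i <= i0 -> filt i = fullv)
  (Hfilt_hi : exists i1 : int, forall i, i1 <= i -> filt i = 0%VS)
  (Hfilt_proj : forall i, subquot_projective (fun a : aa => rhoR (f a))
                                             (filt i) (filt (i + 1)%R))
  (N : vectType F) (rhoN : A -> 'End(N)) (HrhoN : is_rep rhoN)
  (grN : int -> {vspace N}) (loN : int) (lenN : nat)
  (HN : is_adm_hybrid ga f rhoN grN loN lenN)
  (phi : 'Hom(R, N)) (Hphi : is_hom rhoR rhoN phi) (Hphi_surj : limg phi = fullv)
  (Hphi_filt : forall i, (phi @: filt i)%VS = geq_part grN loN lenN i) :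
  exists h : int -> {vspace R},
    [/\ forall i,
          [/\ (h i <= filt i)%VS,
              (h i :&: (filt (i + 1)%R + radflat ga d f rhoR (filt i)))%VS = 0%VS,
              (h i + (filt (i + 1)%R + radflat ga d f rhoR (filt i)))%VS = filt i
            & forall a : aa, a \in ga 0%N -> (rhoR (f a) @: h i <= h i)%VS],
        forall i, (phi @: h i <= grN i)%VS
      & exists (loR : int) (lenR : nat),
          is_adm_hybrid ga f rhoR (grading_from ga d f rhoR h) loR lenR /\
          forall i, (phi @: grading_from ga d f rhoR h i <= grN i)%VS].
Proof.
case: Hfilt_lo => i0 Hlo; case: Hfilt_hi => i1 Hhi.
have Hhi' : forall i, Num.max i0 i1 <= i -> filt i = 0%VS.
  by move=> i hi; apply: Hhi; apply: le_trans hi; rewrite le_max lexx orbT.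
have H01 : i0 <= Num.max i0 i1 by rewrite le_max lexx.
exact: (main_result Hga Hf HrhoR Hfilt_sub Hfilt_dec Hfilt_proj HN Hphi Hphi_filt
          Hideal Hlo Hhi' H01).
Qed.
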